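(* Let $\Omega$ be strictly convex. For a trajectory $X(s)=x+(s-t)v$, $V(s)=v$, define $$\alpha(s)=\xi^2(X(s))+[V(s)\cdot\nabla\xi(X(s))]^2-2\{V(s)\cdot\nabla^2\xi(X(s))\cdot V(s)\}\xi(X(s)).$$ Suppose $X(s)\in\bar\Omega$ for $t_1\le s\le t_2$. Then there exists a constant $C_\xi>0$ (depending only on $\xi$) such that $$e^{C_\xi(|V(t_1)|+1)t_1}\alpha(t_1)\le e^{C_\xi(|V(t_1)|+1)t_2}\alpha(t_2),\qquad e^{-C_\xi(|V(t_1)|+1)t_1}\alpha(t_1)\ge e^{-C_\xi(|V(t_1)|+1)t_2}\alpha(t_2).$$
   Context: $\Omega=\{x\in\mathbb{R}^3:\xi(x)<0\}$ is connected and bounded, $\xi$ smooth with $\nabla\xi\neq0$ on $\{\xi=0\}$. Strictly convex means: there is $c_\xi>0$ with $\partial_{ij}\xi(x)\zeta^i\zeta^j\ge c_\xi|\zeta|^2$ for all $x$ with $\xi(x)\le0$ and all $\zeta\in\mathbb{R}^3$. *)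

(* Defs.v *)
From HB Require Import structures.
From mathcomp Require Import all_boot all_order all_algebra.
From mathcomp Require Import all_classical all_reals all_analysis.
Set Implicit Arguments. Unset Strict Implicit. Unset Printing Implicit Defensive.
Import Order.TTheory GRing.Theory Num.Theory.
Import numFieldNormedType.Exports.
Local Open Scope classical_set_scope.
Local Open Scope ring_scope.

Section Defs.
Variable R : realType.
Notation V3 := 'rV[R]_3.

Definition e3 (i : 'I_3) : V3 := delta_mx 0 i.

Definition dot3 (u w : V3) : R := \sum_(i < 3) u 0 i * w 0 i.
Definition enorm3 (u : V3) : R := Num.sqrt (dot3 u u).

Definition dpart (i : 'I_3) (f : V3 -> R) : V3 -> R := fun x => 'D_(e3 i) f x.

Definition dparts (s : seq 'I_3) (f : V3 -> R) : V3 -> R := foldr dpart f s.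

Definition smooth3 (f : V3 -> R) : Prop :=
  forall (s : seq 'I_3) (x : V3), differentiable (dparts s f) x.

Definition grad3 (f : V3 -> R) (x : V3) : V3 := \row_i dpart i f x.
Definition hess3 (f : V3 -> R) (x : V3) : 'M[R]_3 :=
  \matrix_(i, j) dpart i (dpart j f) x.

Definition qform3 (M : 'M[R]_3) (v : V3) : R := (v *m M *m v^T) 0 0.

Definition Omega (xi : V3 -> R) : set V3 := [set x | xi x < 0].

Definition strictly_convex_xi (xi : V3 -> R) : Prop :=
  exists c : R, 0 < c /\
    forall x : V3, xi x <= 0 -> forall z : V3,
      c * enorm3 z ^+ 2 <= qform3 (hess3 xi x) z.

Definition traj (x v : V3) (t s : R) : V3 := x + (s - t) *: v.
Definition alpha (xi : V3 -> R) (x v : V3) (t s : R) : R :=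
  let X := traj x v t s in
  xi X ^+ 2 + (dot3 v (grad3 xi X)) ^+ 2
  - 2 * qform3 (hess3 xi X) v * xi X.
End Defs.

(* Main.v *)
Require Import Defs.
From HB Require Import structures.
From mathcomp Require Import all_boot all_order all_algebra.
From mathcomp Require Import all_classical all_reals all_analysis.
From mathcomp Require Import ring lra.
Import Order.TTheory GRing.Theory Num.Theory.
Import numFieldNormedType.Exports.
Local Open Scope classical_set_scope.
Local Open Scope ring_scope.
Set Implicit Arguments. Unset Strict Implicit.

Section S.
Variable R : realType.
Notation V3 := 'rV[R]_3.

Lemma D_lin (F : V3 -> R) (y v : V3) : differentiable F y ->
  'D_v F y = \sum_(i < 3) v 0 i * dpart i F y.
Proof.
move=> dF; rewrite deriveE //.
rewrite {1}(row_sum_delta v) linear_sum; apply: eq_bigr => i _.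
by rewrite linearZ /dpart deriveE.
Qed.

Lemma traj_line (F : V3 -> R) (x v : V3) (t s : R) :
  (fun h : R => h^-1 *: (((fun s => F (traj x v t s)) \o shift s) (h *: (1:R)) - F (traj x v t s)))
  = (fun h : R => h^-1 *: ((F \o shift (traj x v t s)) (h *: v) - F (traj x v t s))).
Proof.
apply/funext => h /=; congr (_ *: (F _ - _)).
rewrite /traj /= [h%:A]mulr1 -[h + s - t]addrA scalerDl.
by rewrite addrCA.
Qed.

Lemma is_derive_traj (F : V3 -> R) (x v : V3) (t s : R) :
  differentiable F (traj x v t s) ->
  is_derive s 1 (fun s => F (traj x v t s)) (\sum_(i < 3) v 0 i * dpart i F (traj x v t s)).
Proof.
move=> dF; rewrite -D_lin //.
have dv : derivable F (traj x v t s) v by exact: diff_derivable.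
apply: DeriveDef.
  by rewrite /derivable traj_line.
by rewrite /derive traj_line.
Qed.


Lemma is_derive_sumf n (f : 'I_n -> R -> R) (df : 'I_n -> R) (s : R) :
  (forall i, is_derive s 1 (f i) (df i)) ->
  is_derive s 1 (fun s => \sum_(i < n) f i s) (\sum_(i < n) df i).
Proof.
move=> H; have -> : (fun s => \sum_(i < n) f i s) = \sum_(i < n) f i.
  by apply/funext => r; rewrite fct_sumE.
exact: is_derive_sum.
Qed.

Lemma is_derive_cM (f : R -> R) (c df s : R) :
  is_derive s 1 f df -> is_derive s 1 (fun s => c * f s) (c * df).
Proof. move=> H; exact: (is_deriveZ c H). Qed.

Section G.
Variables (xi : V3 -> R) (x v : V3) (t : R).
Hypothesis sm : smooth3 xi.
Definition G0 s := xi (traj x v t s).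
Definition G1 s := \sum_(i < 3) v 0 i * dpart i xi (traj x v t s).
Definition G2 s := \sum_(k < 3) \sum_(i < 3) (v 0 k * v 0 i) * dpart i (dpart k xi) (traj x v t s).
Definition G3 s := \sum_(k < 3) \sum_(i < 3) (v 0 k * v 0 i) *
   \sum_(j < 3) v 0 j * dpart j (dpart i (dpart k xi)) (traj x v t s).

Lemma dG0 (s : R) : is_derive s 1 G0 (G1 s).
Proof. exact: is_derive_traj (sm [::] _). Qed.

Lemma dG1 (s : R) : is_derive s 1 G1 (G2 s).
Proof.
apply: is_derive_eq.
  apply: is_derive_sumf => i; apply: is_derive_cM.
  exact: is_derive_traj (sm [:: i] _).
rewrite /G2; apply: eq_bigr => k _; rewrite big_distrr; apply: eq_bigr => i _.
by rewrite /= mulrA.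
Qed.

Lemma dG2 (s : R) : is_derive s 1 G2 (G3 s).
Proof.
apply: is_derive_sumf => k; apply: is_derive_sumf => i; apply: is_derive_cM.
exact: is_derive_traj (sm [:: i; k] _).
Qed.

Lemma G1E (s : R) : G1 s = dot3 v (grad3 xi (traj x v t s)).
Proof. by rewrite /G1 /dot3; apply: eq_bigr => i _; rewrite mxE. Qed.

Lemma G2E (s : R) : G2 s = qform3 (hess3 xi (traj x v t s)) v.
Proof.
rewrite /qform3 /G2 !mxE; apply: eq_bigr => k _; rewrite !mxE big_distrl /=.
apply: eq_bigr => i _; rewrite !mxE; ring.
Qed.


Lemma dalpha (s : R) : is_derive s 1 (fun s => alpha xi x v t s) (2 * G0 s * (G1 s - G3 s)).
Proof.
have -> : (fun s => alpha xi x v t s) = G0 * G0 + G1 * G1 - 2 \*: (G2 * G0).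
  apply/funext => r; rewrite /alpha /= -G1E -G2E.
  have -> : (G0 * G0 + G1 * G1 - 2 \*: (G2 * G0)) r =
    G0 r * G0 r + G1 r * G1 r - 2 * (G2 r * G0 r) by [].
  rewrite /G0; ring.
apply: (is_derive_eq (is_deriveB (is_deriveD (is_deriveM (dG0 s) (dG0 s))
   (is_deriveM (dG1 s) (dG1 s))) (is_deriveZ 2 (is_deriveM (dG2 s) (dG0 s))))).
rewrite /GRing.scale /=; ring.
Qed.
End G.

Lemma key (a b q g c B N : R) : a <= 0 -> 0 < c -> 0 <= B -> 0 <= N ->
  c * N ^+ 2 <= q -> `|g| <= B * N ^+ 3 ->
  `|2 * a * (b - g)| <= ((1 + B / c) * (N + 1)) * (a ^+ 2 + b ^+ 2 - 2 * q * a).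
Proof.
move=> a0 c0 B0 N0 hq hg.
set D := B / c.
have D0 : 0 <= D by rewrite /D divr_ge0 // ltW.
have Dc : D * c = B by rewrite /D divfK // gt_eqF.
set u := - a.
have u0 : 0 <= u by rewrite /u oppr_ge0.
have au : a = - u by rewrite /u opprK.
rewrite au.
have h1 : `|2 * - u * (b - g)| <= 2 * u * `|b| + 2 * u * `|g|.
  rewrite !normrM normrN normr_nat (ger0_norm u0) -mulrDr.
  by rewrite ler_wpM2l ?mulr_ge0 // ler_normB.
have nb := normr_ge0 b; have ng := normr_ge0 g.
have bb : `|b| ^+ 2 = b ^+ 2 by rewrite real_normK // num_real.
have h2 : 2 * u * `|b| <= u ^+ 2 + b ^+ 2 by rewrite -bb; have := sqr_ge0 (u - `|b|); rewrite sqrrB; lra.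
have h3 : 2 * u * `|g| <= 2 * u * (B * N ^+ 3) by rewrite ler_wpM2l ?mulr_ge0.
have qge : 0 <= q by apply: le_trans hq; exact: mulr_ge0 (ltW c0) (exprn_ge0 2 N0).
have h4 : 2 * u * (B * N ^+ 3) <= D * N * (2 * q * u).
  rewrite -Dc.
  have hh : 0 <= D * N * (2 * u).
    by apply: mulr_ge0; [exact: mulr_ge0|apply: mulr_ge0].

  have := ler_wpM2l hh hq.
  by rewrite !exprS expr0; nra.
set K := (1 + D) * (N + 1).
have K1 : 1 <= K by rewrite /K; nra.
have KD : D * N <= K by rewrite /K; nra.
have qu : 0 <= 2 * q * u by apply: mulr_ge0; [apply: mulr_ge0|].
have h5 : u ^+ 2 + b ^+ 2 <= K * (u ^+ 2 + b ^+ 2).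
  by rewrite ler_peMl // addr_ge0 // sqr_ge0.
have h6 : D * N * (2 * q * u) <= K * (2 * q * u) by rewrite ler_wpM2r.
have -> : (- u) ^+ 2 + b ^+ 2 - 2 * q * - u = (u ^+ 2 + b ^+ 2) + 2 * q * u.
  by ring.
rewrite [K * _]mulrDr; lra.
Qed.

Lemma sum3_bound (F : 'I_3 -> R) (b : R) : (forall i, `|F i| <= b) ->
  `|\sum_(i < 3) F i| <= 3 * b.
Proof.
move=> H; apply: le_trans (ler_norm_sum _ _ _) _.
apply: (@le_trans _ _ (\sum_(i < 3) b)); first by apply: ler_sum => i _; exact: H.
by rewrite sumr_const card_ord mulr_natl.
Qed.

Lemma dexp (K : R) (f : R -> R) (df s : R) : is_derive s 1 f df ->
  is_derive s 1 (fun s => expR (K * s) * f s) (expR (K * s) * (df + K * f s)).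
Proof.
move=> H.
have -> : (fun s => expR (K * s) * f s) = (expR \o (fun s => K * s)) * f.
  by apply/funext.
apply: is_derive_eq.
rewrite /GRing.scale /=; ring.
Qed.

Lemma mono_up (f df : R -> R) (t1 t2 : R) : (forall s : R, is_derive s 1 f (df s)) ->
  t1 <= t2 -> (forall s, t1 <= s <= t2 -> 0 <= df s) -> f t1 <= f t2.
Proof.
move=> H t12 Hd.
have [|c0 Hc0 E] := MVT_segment t12 (fun s _ => H s).
  by apply: derivable_within_continuous => s _; exact: ex_derive.
rewrite -subr_ge0 E; apply: mulr_ge0; last by rewrite subr_ge0.
by apply: Hd; move: Hc0; rewrite in_itv.
Qed.

Lemma mono_down (f df : R -> R) (t1 t2 : R) : (forall s : R, is_derive s 1 f (df s)) ->
  t1 <= t2 -> (forall s, t1 <= s <= t2 -> df s <= 0) -> f t2 <= f t1.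
Proof.
move=> H t12 Hd.
have [|c0 Hc0 E] := MVT_segment t12 (fun s _ => H s).
  by apply: derivable_within_continuous => s _; exact: ex_derive.
rewrite -subr_le0 E; apply: mulr_le0_ge0; last by rewrite subr_ge0.
by apply: Hd; move: Hc0; rewrite in_itv.
Qed.

Lemma enorm3_ge0 (v : V3) : 0 <= enorm3 v.
Proof. exact: sqrtr_ge0. Qed.

Lemma coord_le (v : V3) (i : 'I_3) : `|v 0 i| <= enorm3 v.
Proof.
rewrite /enorm3 /dot3 -sqrtr_sqr; apply: ler_wsqrtr.
rewrite (bigD1 i) //= -expr2 lerDl; apply: sumr_ge0 => j _.
by rewrite -expr2 sqr_ge0.
Qed.

Lemma mxnorm_le (v : V3) : `|v| <= enorm3 v.
Proof.
rewrite [leLHS]/Num.norm /= mx_normrE; apply: bigmax_le; first exact: enorm3_ge0.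
by move=> [i j] _ /=; rewrite ord1; exact: coord_le.
Qed.

Section T3.
Variable xi : V3 -> R.
Hypothesis sm : smooth3 xi.

Lemma xi_cont : continuous xi.
Proof. by move=> y; apply: differentiable_continuous; exact: (sm [::] y). Qed.

Lemma closure_le0 y : closure (Omega xi) y -> xi y <= 0.
Proof.
have cl : closed (xi @^-1` [set r : R | r <= 0]).
  by apply: preimage_closed; [move=> z _; exact: xi_cont | exact: closed_le].
have sub : Omega xi `<=` xi @^-1` [set r : R | r <= 0] by move=> z /ltW.
by move=> /(closureS sub); rewrite -(closure_id _).1.
Qed.

Lemma closure_bounded M : (forall y, Omega xi y -> enorm3 y <= M) ->
  forall y, closure (Omega xi) y -> `|y| <= M.
Proof.
move=> HM.
have cl : closed ((fun y : V3 => `|y|) @^-1` [set r : R | r <= M]).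
  by apply: preimage_closed; [move=> z _; exact: norm_continuous | exact: closed_le].
have sub : Omega xi `<=` (fun y : V3 => `|y|) @^-1` [set r : R | r <= M].
  by move=> z /HM; apply: le_trans; exact: mxnorm_le.
by move=> y /(closureS sub); rewrite -(closure_id _).1.
Qed.

Lemma closure_compact M : (forall y, Omega xi y -> enorm3 y <= M) ->
  compact (closure (Omega xi)).
Proof.
move=> HM; apply: bounded_closed_compact; last exact: closed_closure.
exists M; split; first exact: num_real.
move=> r Mr y /(@closure_bounded M HM) yM; exact: le_trans yM (ltW Mr).
Qed.


Lemma cont_bound (f : V3 -> R) (A : set V3) : continuous f -> compact A ->
  exists B, 0 <= B /\ forall y, A y -> `|f y| <= B.
Proof.
move=> fc cA.
have cf : compact (f @` A) by apply: continuous_compact => //; exact: continuous_subspaceT.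
have [M0 [_ HM0]] := compact_bounded cf.
exists (`|M0| + 1); split; first by rewrite addr_ge0.
move=> y Ay; apply: (HM0 (`|M0| + 1)); last by exists y.
by apply: le_lt_trans (ler_norm M0) _; rewrite ltrDl.
Qed.

Lemma third_bound M : (forall y, Omega xi y -> enorm3 y <= M) ->
  exists B, 0 <= B /\ forall y, closure (Omega xi) y -> forall i j k : 'I_3,
    `|dpart j (dpart i (dpart k xi)) y| <= B.
Proof.
move=> HM.
have cA := @closure_compact M HM.
have H : forall p : 'I_3 * 'I_3 * 'I_3, exists B, 0 <= B /\
   forall y, closure (Omega xi) y -> `|dpart p.1.2 (dpart p.1.1 (dpart p.2 xi)) y| <= B.
  move=> [[i j] k]; apply: cont_bound => //= z.
  exact: differentiable_continuous (sm [:: j; i; k] z).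
have [f Hf] := choice H.
exists (\sum_p f p); split; first by apply: sumr_ge0 => p _; case: (Hf p).
move=> y Hy i j k.
apply: le_trans (proj2 (Hf ((i, j), k)) y Hy) _.
rewrite (bigD1 ((i, j), k)) //= lerDl; apply: sumr_ge0 => p _; by case: (Hf p).
Qed.

End T3.

Lemma G3_bound (xi : V3 -> R) (x v : V3) (t s B : R) : 0 <= B ->
  (forall i j k : 'I_3, `|dpart j (dpart i (dpart k xi)) (traj x v t s)| <= B) ->
  `|G3 xi x v t s| <= 27 * B * enorm3 v ^+ 3.
Proof.
move=> B0 HB; set N := enorm3 v.
have N0 : 0 <= N := enorm3_ge0 v.
have -> : 27 * B * N ^+ 3 = 3 * (3 * (N * N * (3 * (N * B)))) by ring.
apply: sum3_bound => k; apply: sum3_bound => i.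
rewrite normrM; apply: ler_pM; rewrite ?normr_ge0 //.
  by rewrite normrM; apply: ler_pM; rewrite ?normr_ge0 // coord_le.
apply: sum3_bound => j; rewrite normrM; apply: ler_pM; rewrite ?normr_ge0 //.
exact: coord_le.
Qed.

End S.

Theorem mainTheorem10 (R : realType) (xi : 'rV[R]_3 -> R) :
  smooth3 xi ->
  (forall x, xi x = 0 -> grad3 xi x != 0) ->
  connected (Omega xi) ->
  (exists M : R, forall x, Omega xi x -> enorm3 x <= M) ->
  strictly_convex_xi xi ->
  exists C : R, 0 < C /\
    forall (x v : 'rV[R]_3) (t t1 t2 : R),
      t1 <= t2 ->
      (forall s, t1 <= s <= t2 -> closure (Omega xi) (traj x v t s)) ->
      expR (C * (enorm3 v + 1) * t1) * alpha xi x v t t1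
        <= expR (C * (enorm3 v + 1) * t2) * alpha xi x v t t2 /\
      expR (- (C * (enorm3 v + 1)) * t1) * alpha xi x v t t1
        >= expR (- (C * (enorm3 v + 1)) * t2) * alpha xi x v t t2.
Proof.
move=> sm _ _ [M HM] [c [c0 Hc]].
have [B [B0 HB]] := @third_bound R xi sm M HM.
set B' := 27 * B.
have B'0 : 0 <= B' by rewrite /B' mulr_ge0.
have Dc : 0 <= B' / c by rewrite divr_ge0 // ltW.
exists (1 + B' / c); split; first by lra.
move=> x v t t1 t2 t12 Hcl.
set N := enorm3 v.
set K := (1 + B' / c) * (N + 1).
have Hb : forall s, t1 <= s <= t2 ->
    `|2 * G0 xi x v t s * (G1 xi x v t s - G3 xi x v t s)| <= K * alpha xi x v t s.
  move=> s Hs; have cl := Hcl s Hs.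
  have le0 := @closure_le0 R xi sm _ cl.
  have hq : c * N ^+ 2 <= G2 xi x v t s by rewrite G2E; exact: Hc _ le0 v.
  have hg : `|G3 xi x v t s| <= B' * N ^+ 3.
    by apply: G3_bound => // i j k; exact: HB.
  have := key (G1 xi x v t s) le0 c0 B'0 (enorm3_ge0 v) hq hg.
  by rewrite /alpha -G1E -G2E /G0 /K /N.
split.
- apply: (@mono_up R (fun s => expR (K * s) * alpha xi x v t s)
     (fun s => expR (K * s) * (2 * G0 xi x v t s * (G1 xi x v t s - G3 xi x v t s)
         + K * alpha xi x v t s)) t1 t2).
  - by move=> s; apply: dexp; exact: dalpha sm s.
  - exact: t12.
  move=> s Hs; apply: mulr_ge0; first exact: expR_ge0.
  by have := Hb s Hs; rewrite ler_norml => /andP[h1 h2]; lra.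
- apply: (@mono_down R (fun s => expR (- K * s) * alpha xi x v t s)
     (fun s => expR (- K * s) * (2 * G0 xi x v t s * (G1 xi x v t s - G3 xi x v t s)
         + - K * alpha xi x v t s)) t1 t2).
  - by move=> s; apply: dexp; exact: dalpha sm s.
  - exact: t12.
  move=> s Hs; apply: mulr_ge0_le0; first exact: expR_ge0.
  by have := Hb s Hs; rewrite ler_norml => /andP[h1 h2]; lra.
Qed.
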